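(* Let $X\subseteq\mathbb{R}^n$ be nonempty, closed, convex and bounded; let $F:X\to\mathbb{R}^n$ be $L_F$-Lipschitz continuous and monotone on $X$; let $H:X\to\mathbb{R}^n$ be $L_H$-Lipschitz continuous and monotone on $X$; and assume $\mathrm{SOL}(\mathrm{SOL}(X,F),H)\neq\emptyset$. Let $\gamma>0$ and let $\{\eta_k\}$ be a diminishing (nonincreasing) sequence of positive scalars with $\gamma^2(L_F^2+\eta_0^2L_H^2)\le0.5$. Let $x_0\in X$ and for $k\ge0$ set $y_{k+1}=\Pi_X[x_k-\gamma(F(x_k)+\eta_kH(x_k))]$, $x_{k+1}=\Pi_X[x_k-\gamma(F(y_{k+1})+\eta_kH(y_{k+1}))]$, and $\bar y_K=\frac1K\sum_{k=0}^{K-1}y_{k+1}$ for $K\ge1$. Then: (i) For all $K\ge1$, $-B_H\,\mathrm{dist}(\bar y_K,\mathrm{SOL}(X,F))\le\mathrm{Gap}(\bar y_K,\mathrm{SOL}(X,F),H)\le(\gamma\eta_{K-1}K)^{-1}D_X^2$. (ii) For all $K\ge1$, $0\le\mathrm{Gap}(\bar y_K,X,F)\le(\gamma K)^{-1}D_X^2+\sqrt2\,C_HD_XK^{-1}\sum_{k=0}^{K-1}\eta_k$. (iii) If $\lim_{k\to\infty}k\eta_{k-1}=\infty$ and $\lim_{k\to\infty}\frac1k\sum_{j=0}^{k-1}\eta_j=0$ (e.g., $\eta_k=(k+1)^{-b}$ with $0<b<1$), then every accumulation point of $\{\bar y_k\}$ belongs to $\mathrm{SOL}(\mathrm{SOL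}(X,F),H)$.
   Context: $\mathrm{SOL}(Y,G)=\{x\in Y: G(x)^\top(y-x)\ge0\ \forall y\in Y\}$. Dual gap: $\mathrm{Gap}(x,Y,G)=\sup_{y\in Y}G(y)^\top(x-y)$. $\Pi_X$ Euclidean projection; $\mathrm{dist}(x,Y)=\|x-\Pi_Y[x]\|$. $D_X^2=\sup_{x,y\in X}\frac12\|x-y\|^2$ ($D_X\ge0$), $B_H=\sup_{x\in\mathrm{SOL}(X,F)}\|H(x)\|$, $C_H=\sup_{x\in X}\|H(x)\|$. (The averaged iterate corresponds to the recursion $\bar y_{k+1}=(k\bar y_k+y_{k+1})/(k+1)$.) *)

(* Defs.v *)
From HB Require Import structures.
From mathcomp Require Import all_boot all_order all_algebra.
From mathcomp Require Import all_classical all_reals all_analysis.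
Set Implicit Arguments. Unset Strict Implicit. Unset Printing Implicit Defensive.
Import Order.TTheory GRing.Theory Num.Theory.
Import numFieldNormedType.Exports.
Local Open Scope classical_set_scope.
Local Open Scope ring_scope.

Section Defs.
Context {R : realType} {n : nat}.
Notation vec := 'rV[R]_n.

Definition dotv (u v : vec) : R := \sum_(i < n) u ord0 i * v ord0 i.
Definition enorm (u : vec) : R := Num.sqrt (dotv u u).

Definition SOL (Y : set vec) (G : vec -> vec) : set vec :=
  [set x | Y x /\ forall y, Y y -> 0 <= dotv (G x) (y - x)].

Definition Gap (x : vec) (Y : set vec) (G : vec -> vec) : R :=
  sup [set dotv (G y) (x - y) | y in Y].

(* dist(x,Y) = inf_{y in Y} ||x - y|| (= ||x - Pi_Y x|| for closed convex Y) *)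
Definition distv (x : vec) (Y : set vec) : R :=
  inf [set enorm (x - y) | y in Y].

Definition DX2 (X : set vec) : R :=
  sup [set (enorm (x - y)) ^+ 2 / 2 | x in X & y in X].

Definition supnorm (Y : set vec) (H : vec -> vec) : R :=
  sup [set enorm (H x) | x in Y].

Definition vi_convex_set (X : set vec) : Prop :=
  forall x y (t : R), X x -> X y -> 0 <= t <= 1 -> X (t *: x + (1 - t) *: y).

Definition vi_bounded_set (X : set vec) : Prop :=
  exists M : R, forall x, X x -> enorm x <= M.

Definition vi_lipschitz_on (X : set vec) (G : vec -> vec) (L : R) : Prop :=
  forall x y, X x -> X y -> enorm (G x - G y) <= L * enorm (x - y).

Definition vi_monotone_on (X : set vec) (G : vec -> vec) : Prop :=
  forall x y, X x -> X y -> 0 <= dotv (G x - G y) (x - y).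

Definition vi_is_proj (X : set vec) (x p : vec) : Prop :=
  X p /\ forall y, X y -> enorm (x - p) <= enorm (x - y).

Definition avg_iter (y : nat -> vec) (K : nat) : vec :=
  K%:R^-1 *: \sum_(k < K) y k.+1.

End Defs.

(* Main.v *)
Require Import Defs.
From HB Require Import structures.
From mathcomp Require Import all_boot all_order all_algebra.
From mathcomp Require Import all_classical all_reals all_analysis.
From mathcomp Require Import ring lra.
Import Order.TTheory GRing.Theory Num.Theory.
Import numFieldNormedType.Exports.
Local Open Scope classical_set_scope.
Local Open Scope ring_scope.


Section Basic.
Context {R : realType} {n : nat}.
Implicit Types u v w : 'rV[R]_n.

Lemma dotvC u v : dotv u v = dotv v u.
Proof. by apply: eq_bigr => i _; rewrite mulrC. Qed.

Lemma dotvDl u v w : dotv (u + v) w = dotv u w + dotv v w.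
Proof. by rewrite /dotv -big_split; apply: eq_bigr => i _; rewrite !mxE mulrDl. Qed.

Lemma dotvDr u v w : dotv w (u + v) = dotv w u + dotv w v.
Proof. by rewrite dotvC dotvDl !(dotvC w). Qed.

Lemma dotvZl (a : R) u v : dotv (a *: u) v = a * dotv u v.
Proof. by rewrite /dotv mulr_sumr; apply: eq_bigr => i _; rewrite !mxE mulrA. Qed.

Lemma dotvZr (a : R) u v : dotv v (a *: u) = a * dotv v u.
Proof. by rewrite dotvC dotvZl dotvC. Qed.

Lemma dotvNl u v : dotv (- u) v = - dotv u v.
Proof. by rewrite -scaleN1r dotvZl mulN1r. Qed.

Lemma dotvNr u v : dotv v (- u) = - dotv v u.
Proof. by rewrite -scaleN1r dotvZr mulN1r. Qed.

Lemma dotvBl u v w : dotv (u - v) w = dotv u w - dotv v w.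
Proof. by rewrite dotvDl dotvNl. Qed.

Lemma dotvBr u v w : dotv w (u - v) = dotv w u - dotv w v.
Proof. by rewrite dotvDr dotvNr. Qed.

Lemma dotv0r u : dotv u 0 = 0.
Proof. by rewrite /dotv big1 // => i _; rewrite mxE mulr0. Qed.

Lemma dotv_ge0 u : 0 <= dotv u u.
Proof. by apply: sumr_ge0 => i _; rewrite -expr2 sqr_ge0. Qed.

Lemma dotv_sumr u (K : nat) (f : nat -> 'rV[R]_n) :
  dotv u (\sum_(k < K) f k) = \sum_(k < K) dotv u (f k).
Proof.
elim: K => [|K IH]; first by rewrite !big_ord0 dotv0r.
by rewrite !big_ord_recr /= dotvDr IH.
Qed.

Lemma enorm_ge0 u : 0 <= enorm u.
Proof. exact: sqrtr_ge0. Qed.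

Lemma enorm_sq u : enorm u ^+ 2 = dotv u u.
Proof. by rewrite /enorm sqr_sqrtr // dotv_ge0. Qed.

Lemma CS u v : dotv u v <= enorm u * enorm v.
Proof.
have key : dotv u v ^+ 2 <= dotv u u * dotv v v.
  set a := dotv v v; set b := dotv u v; set c := dotv u u.
  have q t : 0 <= c - 2 * t * b + t ^+ 2 * a.
    have := dotv_ge0 (u - t *: v).
    rewrite !dotvBl !dotvBr !dotvZl !dotvZr (dotvC v u) -/a -/b -/c.
    by move=> h; nra.
  have a0 : 0 <= a by apply: dotv_ge0.
  have c0 : 0 <= c by apply: dotv_ge0.
  have [a_eq0|a_gt0] := eqVneq a 0.
    have /eqP b0 : b == 0.
      apply/negPn/negP => bn0.
      have := q ((c + 1) / (2 * b)); rewrite a_eq0 mulr0 addr0.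
      have -> : 2 * ((c + 1) / (2 * b)) * b = c + 1.
        by field.
      lra.
    by rewrite b0 a_eq0 expr0n /= mulr0.
  have ap : 0 < a by rewrite lt_def a_gt0 a0.
  have := q (b / a).
  have -> : c - 2 * (b / a) * b + (b / a) ^+ 2 * a = (c * a - b ^+ 2) / a.
    by field.
  rewrite pmulr_lge0 ?invr_gt0 // subr_ge0 => h; lra.
have : `|dotv u v| <= enorm u * enorm v.
  rewrite /enorm -sqrtrM ?dotv_ge0 // -(sqrtr_sqr (dotv u v)).
  by rewrite ler_sqrt ?mulr_ge0 ?dotv_ge0 // sqr_normr.
by apply: le_trans; apply: ler_norm.
Qed.

Lemma CSN u v : - (enorm u * enorm v) <= dotv u v.
Proof. by have := CS (- u) v; rewrite dotvNl /enorm dotvNl dotvNr opprK; lra. Qed.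

Lemma enormZ (a : R) u : enorm (a *: u) = `|a| * enorm u.
Proof.
by rewrite /enorm dotvZl dotvZr mulrA -expr2 sqrtrM ?sqr_ge0 // sqrtr_sqr.
Qed.

Lemma enormN u : enorm (- u) = enorm u.
Proof. by rewrite /enorm dotvNl dotvNr opprK. Qed.

Lemma enormB u v : enorm (u - v) = enorm (v - u).
Proof. by rewrite -enormN opprB. Qed.

Lemma enormD u v : enorm (u + v) <= enorm u + enorm v.
Proof.
have h : enorm (u + v) ^+ 2 <= (enorm u + enorm v) ^+ 2.
  rewrite enorm_sq dotvDl !dotvDr sqrrD !enorm_sq (dotvC v u).
  have := CS u v; lra.
rewrite -ler_sqr ?nnegrE ?addr_ge0 ?enorm_ge0 //.
Qed.

End Basic.


Section B2.
Context {R : realType} {n : nat}.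
Implicit Types u v w : 'rV[R]_n.

Lemma small_t (M c : R) : 0 <= M -> (forall t : R, 0 < t -> t <= 1 -> - (t * M) <= c) -> 0 <= c.
Proof.
move=> M0 h; rewrite leNgt; apply/negP => c0.
have hM : 0 < M - c by lra.
have := h ((- c) / (M - c)).
have t0 : 0 < (- c) / (M - c) by apply: divr_gt0; lra.
have t1 : (- c) / (M - c) <= 1 by rewrite ler_pdivrMr // mul1r; lra.
move=> /(_ t0 t1).
have -> : - (- c / (M - c) * M) = c * M / (M - c) by field; lra.
rewrite ler_pdivrMr //; nra.
Qed.

Lemma le0_eps (a : R) : (forall e : R, 0 < e -> a <= e) -> a <= 0.
Proof.
move=> h; rewrite leNgt; apply/negP => a0.
have := h (a / 2); rewrite divr_gt0 // => /(_ isT); lra.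
Qed.

Lemma vec_conv_eq (t : R) (z y p : 'rV[R]_n) :
  z - (t *: y + (1 - t) *: p) = (z - p) - t *: (y - p).
Proof.
rewrite scalerBl scale1r !scalerBr !opprD !addrA.
by congr (_ + _); rewrite addrAC.
Qed.

Lemma dotv_expand (d e : 'rV[R]_n) (t : R) :
  dotv (d - t *: e) (d - t *: e) = dotv d d - 2 * t * dotv d e + t ^+ 2 * dotv e e.
Proof. rewrite !dotvBl !dotvBr !dotvZl !dotvZr (dotvC e d); ring. Qed.

Lemma proj_vi (X : set 'rV[R]_n) (z p y : 'rV[R]_n) :
  vi_convex_set X -> vi_is_proj X z p -> X y -> dotv (z - p) (y - p) <= 0.
Proof.
move=> cX [Xp hp] Xy.
set d := z - p; set e := y - p.
rewrite -oppr_ge0.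
apply: (@small_t (dotv e e / 2)).
  by apply: divr_ge0 => //; apply: dotv_ge0.
move=> t t0 t1.
have Xw : X (t *: y + (1 - t) *: p) by apply: cX => //; rewrite (ltW t0) t1.
have := hp _ Xw.
rewrite /enorm ler_sqrt ?dotv_ge0 // vec_conv_eq -/d -/e.
rewrite dotv_expand.
move: (dotv d d) (dotv d e) (dotv e e) => a b c.
move=> h.
have : 2 * t * b <= t * (t * c) by lra.
move=> h2.
have : 2 * b <= t * c.
  by rewrite -(ler_pM2l t0); lra.
lra.
Qed.

End B2.


Section B3.
Context {R : realType} {n : nat}.
Implicit Types u v w : 'rV[R]_n.

Lemma minty (Y : set 'rV[R]_n) (G : 'rV[R]_n -> 'rV[R]_n) (L : R) z :
  vi_convex_set Y -> vi_lipschitz_on Y G L -> 0 <= L -> Y z ->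
  (forall x, Y x -> dotv (G x) (z - x) <= 0) -> SOL Y G z.
Proof.
move=> cY lG L0 Yz hM; split => // y Yy.
apply: (@small_t _ (L * (enorm (y - z) * enorm (y - z)))).
  by rewrite mulr_ge0 // mulr_ge0 // enorm_ge0.
move=> t t0 t1.
set w := t *: y + (1 - t) *: z.
have Yw : Y w by apply: cY => //; rewrite (ltW t0) t1.
have ezw : z - w = - (t *: (y - z)).
  by rewrite /w vec_conv_eq subrr add0r.
have h1 : 0 <= dotv (G w) (y - z).
  have := hM _ Yw; rewrite ezw dotvNr dotvZr.
  by move=> h; rewrite -(pmulr_rge0 _ t0); lra.
have h2 : enorm (G z - G w) <= L * (t * enorm (y - z)).
  have := lG _ _ Yz Yw; rewrite ezw enormN enormZ ger0_norm //; exact: ltW.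
have h3 := CSN (G z - G w) (y - z).
have e0 := enorm_ge0 (y - z).
have -> : dotv (G z) (y - z) = dotv (G w) (y - z) + dotv (G z - G w) (y - z).
  by rewrite dotvBl; ring.
have h4 : enorm (G z - G w) * enorm (y - z) <= L * (t * enorm (y - z)) * enorm (y - z).
  by apply: ler_wpM2r.
nra.
Qed.

Lemma SOL_convex (X : set 'rV[R]_n) (F : 'rV[R]_n -> 'rV[R]_n) (L : R) :
  vi_convex_set X -> vi_lipschitz_on X F L -> 0 <= L -> vi_monotone_on X F ->
  vi_convex_set (SOL X F).
Proof.
move=> cX lF L0 mF a b t [Xa ha] [Xb hb] t01.
apply: (@minty X F L _ cX lF L0); first exact: cX.
move=> x Xx.
have ea := ha _ Xx; have eb := hb _ Xx.
have ma := mF _ _ Xa Xx; have mb := mF _ _ Xb Xx.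
rewrite !dotvBl !dotvBr in ea eb ma mb *.
rewrite dotvDr !dotvZr.

case/andP: t01 => t0 t1.

have ma' : 0 <= dotv (F x) x - dotv (F x) a by lra.
have mb' : 0 <= dotv (F x) x - dotv (F x) b by lra.
have : 0 <= t * (dotv (F x) x - dotv (F x) a) by apply: mulr_ge0.
have : 0 <= (1 - t) * (dotv (F x) x - dotv (F x) b) by apply: mulr_ge0; lra.
lra.
Qed.

Lemma avg_in (X : set 'rV[R]_n) (y : nat -> 'rV[R]_n) K :
  vi_convex_set X -> (forall k, X (y k.+1)) -> (1 <= K)%N -> X (avg_iter y K).
Proof.
move=> cX Xy; case: K => // K _.
elim: K => [|K IH].
  by rewrite /avg_iter big_ord_recr big_ord0 /= invr1 scale1r (add0r (y 1%N)); apply: Xy.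
have -> : avg_iter y K.+2 = (K.+2%:R^-1) *: y K.+2 + (1 - K.+2%:R^-1) *: avg_iter y K.+1.
  rewrite /avg_iter [in LHS]big_ord_recr /= scalerDr addrC; congr (_ + _).
  rewrite scalerA; congr (_ *: _).
  have h1 : (K.+1%:R : R) != 0 by rewrite pnatr_eq0.
  have h2 : (K.+2%:R : R) != 0 by rewrite pnatr_eq0.
  rewrite [in RHS](_ : (K.+2%:R : R) = K.+1%:R + 1); last by rewrite -natr1.
  rewrite (_ : (K.+2%:R : R) = K.+1%:R + 1) in h2; last by rewrite -natr1.
  field; apply/andP; split; apply: lt0r_neq0; have := ler0n R K; lra.
apply: cX => //; apply/andP; split; first by rewrite invr_ge0.
by rewrite invf_le1 // ler1n.
Qed.

Lemma dot_avg (y : nat -> 'rV[R]_n) a x K : (1 <= K)%N ->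
  dotv a (avg_iter y K - x) = K%:R^-1 * \sum_(k < K) dotv a (y k.+1 - x).
Proof.
move=> K1.
have -> : avg_iter y K - x = K%:R^-1 *: \sum_(k < K) (y k.+1 - x).
  rewrite /avg_iter sumrB sumr_const card_ord scalerBr; congr (_ - _).
  by rewrite -[x *+ K]scaler_nat scalerA mulVf ?scale1r // pnatr_eq0 -lt0n.
by rewrite dotvZr (dotv_sumr _ _ (fun k => y k.+1 - x)).
Qed.

End B3.


Section B4.
Context {R : realType} {n : nat}.
Implicit Types u v w : 'rV[R]_n.

Lemma eg_alg (a u y p g ga : 'rV[R]_n) (c : R) :
  dotv (a - c *: g - p) (u - p) <= 0 ->
  dotv (a - c *: ga - y) (p - y) <= 0 ->
  - (dotv (y - a) (y - a) + dotv (p - y) (p - y)) <= 2 * c * dotv (g - ga) (p - y) ->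
  2 * c * dotv g (y - u) <= dotv (a - u) (a - u) - dotv (p - u) (p - u).
Proof.
rewrite !dotvBl !dotvBr !dotvZl ?dotvBl ?dotvBr ?dotvZl.
rewrite ?(dotvC u a) ?(dotvC y a) ?(dotvC p a) ?(dotvC y u) ?(dotvC p u) ?(dotvC p y).
lra.
Qed.

Lemma eg_step (X : set 'rV[R]_n) (F H : 'rV[R]_n -> 'rV[R]_n) (LF LH gamma eta eta0 : R)
  (PiX : 'rV[R]_n -> 'rV[R]_n) (a u y p : 'rV[R]_n) :
  vi_convex_set X -> 0 <= LF -> vi_lipschitz_on X F LF -> 0 <= LH -> vi_lipschitz_on X H LH ->
  0 < gamma -> 0 < eta -> eta <= eta0 ->
  gamma ^+ 2 * (LF ^+ 2 + eta0 ^+ 2 * LH ^+ 2) <= 1 / 2 ->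
  (forall z, vi_is_proj X z (PiX z)) -> X a -> X u ->
  y = PiX (a - gamma *: (F a + eta *: H a)) ->
  p = PiX (a - gamma *: (F y + eta *: H y)) ->
  2 * gamma * (dotv (F y) (y - u) + eta * dotv (H y) (y - u))
    <= dotv (a - u) (a - u) - dotv (p - u) (p - u).
Proof.
move=> cX LF0 lF LH0 lH g0 e0 ee0 hg hP Xa Xu ey ep.
have [Xy _] : vi_is_proj X (a - gamma *: (F a + eta *: H a)) y by rewrite ey.
have [Xp _] : vi_is_proj X (a - gamma *: (F y + eta *: H y)) p by rewrite ep.
have -> : dotv (F y) (y - u) + eta * dotv (H y) (y - u) = dotv (F y + eta *: H y) (y - u).
  by rewrite dotvDl dotvZl.
apply: (@eg_alg a u y p (F y + eta *: H y) (F a + eta *: H a)).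
- apply: (@proj_vi _ _ X) => //; rewrite ep; exact: hP.
- apply: (@proj_vi _ _ X) => //; rewrite ey; exact: hP.
have hF := lF _ _ Xy Xa; have hH := lH _ _ Xy Xa.
have c1 := CSN (F y - F a) (p - y).
have c2 := CSN (H y - H a) (p - y).
have -> : F y + eta *: H y - (F a + eta *: H a) = (F y - F a) + eta *: (H y - H a).
  by rewrite scalerBr opprD !addrA; congr (_ + _); rewrite addrAC.
rewrite (dotvDl (F y - F a)) dotvZl.
rewrite -!enorm_sq.
set r := enorm (y - a); set s := enorm (p - y).
move: c1 c2 hF hH; rewrite -/r -/s => c1 c2 hF hH.
have r0 : 0 <= r by apply: enorm_ge0.
have s0 : 0 <= s by apply: enorm_ge0.
have f1 : enorm (F y - F a) * s <= LF * r * s by apply: ler_wpM2r.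
have f2 : enorm (H y - H a) * s <= LH * r * s by apply: ler_wpM2r.
set cc := gamma * (LF + eta * LH).
have cc0 : 0 <= cc by apply: mulr_ge0; [lra | apply: addr_ge0 => //; apply: mulr_ge0 => //; lra].
have cc1 : cc <= 1.
  have h2 : cc ^+ 2 <= 1.
    have : eta ^+ 2 <= eta0 ^+ 2 by rewrite ler_sqr ?nnegrE //; lra.
    move=> he.
    have : cc ^+ 2 <= 2 * (gamma ^+ 2 * (LF ^+ 2 + eta ^+ 2 * LH ^+ 2)).
      rewrite /cc; have := sqr_ge0 (LF - eta * LH); nra.
    have : gamma ^+ 2 * (eta ^+ 2 * LH ^+ 2) <= gamma ^+ 2 * (eta0 ^+ 2 * LH ^+ 2).
      by apply: ler_wpM2l; [apply: sqr_ge0 | apply: ler_wpM2r => //; apply: sqr_ge0].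
    lra.
  by rewrite -(ler_sqr) ?nnegrE // expr1n.
have rs0 : 0 <= r * s by apply: mulr_ge0.
have : 2 * cc * (r * s) <= r ^+ 2 + s ^+ 2.
  have := sqr_ge0 (r - s); have : cc * (r * s) <= r * s by rewrite ler_piMl.
  nra.
move=> h3.
have f2' : eta * (enorm (H y - H a) * s) <= eta * (LH * r * s) by apply: ler_wpM2l => //; lra.
have c2' : - (eta * (enorm (H y - H a) * s)) <= eta * dotv (H y - H a) (p - y).
  by rewrite -mulrN; apply: ler_wpM2l => //; lra.
have h5 : - (LF * r * s) - eta * (LH * r * s) <= dotv (F y - F a) (p - y) + eta * dotv (H y - H a) (p - y).
  lra.
have h6 : 2 * gamma * (- (LF * r * s) - eta * (LH * r * s)) <= 2 * gamma * (dotv (F y - F a) (p - y) + eta * dotv (H y - H a) (p - y)).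
  by apply: ler_wpM2l => //; lra.
have h7 : 2 * gamma * (- (LF * r * s) - eta * (LH * r * s)) = - (2 * cc * (r * s)) by rewrite /cc; ring.
lra.
Qed.

End B4.


Lemma nbhs_mx {R : realType} {n : nat} (z : 'rV[R]_n) (B : set 'rV[R]_n) (e : R) :
  0 < e -> (forall v : 'rV[R]_n, (forall i, `|z ord0 i - v ord0 i| < e) -> B v) -> nbhs z B.
Proof.
move=> e0 hB; apply/nbhs_ballP; exists e => // v /= hv.
apply: hB => i.
move: hv; rewrite /ball /=.
by case=> _ /(_ ord0 i). Qed.


Section B5.
Context {R : realType} {n : nat}.

Lemma dot_cont (a z v : 'rV[R]_n) (d : R) : 0 <= d ->
  (forall i, `|z ord0 i - v ord0 i| < d) ->
  dotv a (z - v) <= (\sum_(i < n) `|a ord0 i|) * d.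
Proof.
move=> d0 hv.
rewrite /dotv mulr_suml.
apply: le_trans (ler_norm _) _.
apply: le_trans (ler_norm_sum _ _ _) _.
apply: ler_sum => i _.
rewrite normrM !mxE; apply: ler_wpM2l => //; exact: ltW.
Qed.

Lemma cluster_dot (u : nat -> 'rV[R]_n) (z a w : 'rV[R]_n) (g : nat -> R) :
  cluster (u @ \oo) z ->
  (forall e, 0 < e -> \forall K \near \oo, g K <= e) ->
  (forall K, (1 <= K)%N -> dotv a (u K - w) <= g K) ->
  dotv a (z - w) <= 0.
Proof.
move=> cz hg hu.
apply: le0_eps => e e0.
set S := \sum_(i < n) `|a ord0 i|.
have S0 : 0 <= S by apply: sumr_ge0 => i _.
have e2 : 0 < e / 2 by apply: divr_gt0.
set d := e / 2 / (S + 1).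
have d0 : 0 < d by apply: divr_gt0 => //; lra.
have hA : (u @ \oo) [set v | dotv a (v - w) <= e / 2].
  have := hg _ e2; case=> N _ hN.
  exists (maxn N 1) => // K /= hK.
  apply: le_trans (hu K _) (hN K _).
    by apply: leq_trans hK; rewrite leq_maxr.
  by apply: leq_trans hK; rewrite leq_maxl.
have hB : nbhs z [set v | dotv a (z - w) - e / 2 < dotv a (v - w)].
  apply: (@nbhs_mx _ _ z _ d d0) => v hv /=.
  have := @dot_cont a z v d (ltW d0) hv.
  have -> : dotv a (z - v) = dotv a (z - w) - dotv a (v - w).
    by rewrite !dotvBr; ring.
  have : S * d < e / 2.
    rewrite /d mulrA ltr_pdivrMr; last lra.
    have : 0 <= S * (e / 2) by apply: mulr_ge0 => //; lra.
    nra.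
  rewrite -/S; lra.
have [v [/= h1 h2]] := cz _ _ hA hB.
lra.
Qed.

End B5.


Section B6.
Context {R : realType} {n : nat}.

Lemma tele (d : nat -> R) K : \sum_(k < K) (d k - d k.+1) = d 0%N - d K.
Proof.
elim: K => [|K IH]; first by rewrite big_ord0 subrr.
by rewrite big_ord_recr /= IH; ring.
Qed.

Lemma tele_w (d w : nat -> R) (D : R) :
  (forall k, 0 <= d k <= D) -> (forall k, 0 < w k) -> (forall k, w k.+1 <= w k) ->
  forall m, \sum_(k < m.+1) (d k - d k.+1) / w k <= (D - d m.+1) / w m.
Proof.
move=> hd hw hm; elim=> [|m IH].
  rewrite big_ord_recr big_ord0 /= add0r ler_pM2r ?invr_gt0 //.
  by have := hd 0%N; lra.
rewrite big_ord_recr /=.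
have h1 : (D - d m.+1) / w m <= (D - d m.+1) / w m.+1.
  apply: ler_wpM2l; first by have := hd m.+1; lra.
  by rewrite lef_pV2 ?posrE.
have -> : (D - d m.+2) / w m.+1 = (D - d m.+1) / w m.+1 + (d m.+1 - d m.+2) / w m.+1.
  by rewrite -mulrDl; congr (_ * _); ring.
lra.
Qed.

Lemma my_sup_ge (S : set R) (B a : R) : (forall s, S s -> s <= B) -> S a -> a <= sup S.
Proof. by move=> hB Sa; apply: ub_le_sup => //; exists B. Qed.

Lemma my_sup_le (S : set R) (B : R) : S !=set0 -> (forall s, S s -> s <= B) -> sup S <= B.
Proof. by move=> S0 hB; apply: ge_sup. Qed.

Lemma bnd_G (X : set 'rV[R]_n) (G : 'rV[R]_n -> 'rV[R]_n) (L M : R) x0 :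
  (forall v, X v -> enorm v <= M) -> X x0 -> vi_lipschitz_on X G L -> 0 <= L ->
  exists C, 0 <= C /\ forall v, X v -> enorm (G v) <= C.
Proof.
move=> hM Xx0 lG L0.
have M0 : 0 <= M by apply: le_trans (enorm_ge0 x0) (hM _ Xx0).
exists (L * (M + M) + enorm (G x0)); split.
  by apply: addr_ge0; [apply: mulr_ge0; lra | apply: enorm_ge0].
move=> v Xv.
have h1 : enorm (G v) <= enorm (G v - G x0) + enorm (G x0).
  by have := enormD (G v - G x0) (G x0); rewrite subrK.
have h2 := lG _ _ Xv Xx0.
have h3 : enorm (v - x0) <= M + M.
  have := enormD v (- x0); rewrite enormN => h; have := hM _ Xv; have := hM _ Xx0; lra.
have : L * enorm (v - x0) <= L * (M + M) by apply: ler_wpM2l.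
lra.
Qed.

End B6.


Theorem theorem3p4 (R : realType) (n : nat) (X : set 'rV[R]_n)
  (F H : 'rV[R]_n -> 'rV[R]_n) (LF LH gamma : R) (eta : nat -> R)
  (PiX : 'rV[R]_n -> 'rV[R]_n) (x y : nat -> 'rV[R]_n) :
  X !=set0 -> topology_structure.closed X -> vi_convex_set X -> vi_bounded_set X ->
  0 <= LF -> vi_lipschitz_on X F LF -> vi_monotone_on X F ->
  0 <= LH -> vi_lipschitz_on X H LH -> vi_monotone_on X H ->
  SOL (SOL X F) H !=set0 ->
  0 < gamma -> (forall k, 0 < eta k) -> (forall k, eta k.+1 <= eta k) ->
  gamma ^+ 2 * (LF ^+ 2 + eta 0%N ^+ 2 * LH ^+ 2) <= 1 / 2 ->
  (forall z, vi_is_proj X z (PiX z)) ->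
  X (x 0%N) ->
  (forall k, y k.+1 = PiX (x k - gamma *: (F (x k) + eta k *: H (x k)))) ->
  (forall k, x k.+1 = PiX (x k - gamma *: (F (y k.+1) + eta k *: H (y k.+1)))) ->
  (* (i) *)
  (forall K, (1 <= K)%N ->
     - supnorm (SOL X F) H * distv (avg_iter y K) (SOL X F)
       <= Gap (avg_iter y K) (SOL X F) H
     /\ Gap (avg_iter y K) (SOL X F) H
       <= (gamma * eta K.-1 * K%:R)^-1 * DX2 X)
  /\
  (* (ii) *)
  (forall K, (1 <= K)%N ->
     0 <= Gap (avg_iter y K) X F
     /\ Gap (avg_iter y K) X F
       <= (gamma * K%:R)^-1 * DX2 X
          + Num.sqrt 2 * supnorm X H * Num.sqrt (DX2 X) * K%:R^-1
            * \sum_(k < K) eta k)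
  /\
  (* (iii) *)
  (((fun k : nat => k%:R * eta k.-1) @ \oo --> +oo) ->
   ((fun k : nat => k%:R^-1 * \sum_(j < k) eta j) @ \oo --> (0 : R)) ->
   forall z, cluster ((avg_iter y) @ \oo) z -> SOL (SOL X F) H z).
Proof.
move=> X0 Xcl cX [M hM] LF0 lF mF LH0 lH mH [zs zsS] g0 e0 edec hg hP Xx0 ey ex.
have Xx : forall k, X (x k).
  elim=> [|k IH] //; rewrite ex.
  by case: (hP (x k - gamma *: (F (y k.+1) + eta k *: H (y k.+1)))).
have Xy : forall k, X (y k.+1).
  by move=> k; rewrite ey; case: (hP (x k - gamma *: (F (x k) + eta k *: H (x k)))).
have ele : forall k, eta k <= eta 0%N.
  elim=> [|k IH] //; exact: le_trans (edec k) IH.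
have M0 : 0 <= M by apply: le_trans (enorm_ge0 (x 0%N)) (hM _ Xx0).
set D := DX2 X.
have hDset : forall s, [set (enorm (a - b)) ^+ 2 / 2 | a in X & b in X] s -> s <= (M + M) ^+ 2 / 2.
  move=> s [a Xa [b Xb <-]].
  rewrite ler_pM2r ?invr_gt0 // ler_sqr ?nnegrE ?enorm_ge0 ?addr_ge0 //.
  have := enormD a (- b); rewrite enormN => h; have := hM _ Xa; have := hM _ Xb; lra.
have dd : forall a b, X a -> X b -> dotv (a - b) (a - b) <= 2 * D.
  move=> a b Xa Xb.
  have : (enorm (a - b)) ^+ 2 / 2 <= D.
    by apply: (@my_sup_ge _ _ _ _ hDset); exists a => //; exists b.
  rewrite enorm_sq; lra.
have D0 : 0 <= D.
  by have := dd _ _ Xx0 Xx0; rewrite subrr dotv0r; lra.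
have [CH0 [CH0p hCH0]] := @bnd_G _ _ X H LH M (x 0%N) hM Xx0 lH LH0.
have [CF0 [CF0p hCF0]] := @bnd_G _ _ X F LF M (x 0%N) hM Xx0 lF LF0.
set CH := supnorm X H.
have hCH : forall v, X v -> enorm (H v) <= CH.
  move=> v Xv; apply: (@my_sup_ge _ _ CH0); last by exists v.
  by move=> s [w Xw <-]; apply: hCH0.
have CHp : 0 <= CH by apply: le_trans (enorm_ge0 _) (hCH _ Xx0).
have step : forall k u, X u ->
    2 * gamma * (dotv (F (y k.+1)) (y k.+1 - u) + eta k * dotv (H (y k.+1)) (y k.+1 - u))
    <= dotv (x k - u) (x k - u) - dotv (x k.+1 - u) (x k.+1 - u).
  move=> k u Xu.
  exact: (@eg_step _ _ X F H LF LH gamma (eta k) (eta 0%N) PiX (x k) u (y k.+1) (x k.+1) cX LF0 lF LH0 lH g0 (e0 k) (ele k) hg hP (Xx k) Xu (ey k) (ex k)).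
have nat_pos : forall j : nat, 0 < 1 + j%:R :> R by move=> j; have := ler0n R j; lra.
have pt1 : forall K, (1 <= K)%N -> forall u, SOL X F u ->
    dotv (H u) (avg_iter y K - u) <= (gamma * eta K.-1 * K%:R)^-1 * D.
  case=> // m _ u [Xu hu].
  rewrite dot_avg //.
  set d := fun k => dotv (x k - u) (x k - u).
  have term : forall k, dotv (H u) (y k.+1 - u) <= (d k - d k.+1) / (2 * gamma * eta k).
    move=> k.
    have s := step k u Xu.
    have m1 := mF _ _ (Xy k) Xu; have m2 := mH _ _ (Xy k) Xu.
    have h1 := hu _ (Xy k).
    rewrite !dotvBl in m1 m2.
    have ek := e0 k.
    rewrite ler_pdivlMr; last by apply: mulr_gt0 => //; apply: mulr_gt0.
    have A2 : eta k * dotv (H u) (y k.+1 - u) <= eta k * dotv (H (y k.+1)) (y k.+1 - u).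
      by apply: ler_wpM2l; lra.
    have A3 : 2 * gamma * (eta k * dotv (H u) (y k.+1 - u)) <=
       2 * gamma * (dotv (F (y k.+1)) (y k.+1 - u) + eta k * dotv (H (y k.+1)) (y k.+1 - u)).
      by apply: ler_wpM2l; lra.
    have -> : dotv (H u) (y k.+1 - u) * (2 * gamma * eta k) = 2 * gamma * (eta k * dotv (H u) (y k.+1 - u)) by ring.
    rewrite /d; lra.
  have sum1 : \sum_(k < m.+1) dotv (H u) (y k.+1 - u) <= (2 * D - d m.+1) / (2 * gamma * eta m).
    have S1 : \sum_(k < m.+1) dotv (H u) (y k.+1 - u) <= \sum_(k < m.+1) (d k - d k.+1) / (2 * gamma * eta k).
      by apply: ler_sum => k _; exact: term.
    apply: le_trans S1 _.
    have := @tele_w _ d (fun k => 2 * gamma * eta k) (2 * D).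
    apply.
    - by move=> k; rewrite /d dotv_ge0 /=; apply: dd.
    - by move=> k; apply: mulr_gt0 => //; apply: mulr_gt0.
    - by move=> k; apply: ler_wpM2l => //; apply: mulr_ge0 => //; apply: ltW.
  have dK : 0 <= d m.+1 by apply: dotv_ge0.
  have pos : 0 < 2 * gamma * eta m by apply: mulr_gt0 => //; apply: mulr_gt0.
  apply: le_trans (ler_wpM2l _ sum1) _; first by rewrite invr_ge0.
  rewrite /=.
  have -> : (gamma * eta m * m.+1%:R)^-1 * D = m.+1%:R^-1 * (2 * D / (2 * gamma * eta m)).
    by field; rewrite !lt0r_neq0 ?nat_pos ?e0.
  apply: ler_wpM2l; first by rewrite invr_ge0.
  by apply: ler_wpM2r; [rewrite invr_ge0 ltW | lra].
set c := Num.sqrt 2 * CH * Num.sqrt D.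
have c0 : 0 <= c by rewrite /c !mulr_ge0 ?sqrtr_ge0.
have pt2 : forall K, (1 <= K)%N -> forall u, X u ->
    dotv (F u) (avg_iter y K - u) <= (gamma * K%:R)^-1 * D + c * K%:R^-1 * \sum_(k < K) eta k.
  case=> // m _ u Xu.
  rewrite dot_avg //.
  set d := fun k => dotv (x k - u) (x k - u).
  have term : forall k, dotv (F u) (y k.+1 - u) <= (d k - d k.+1) / (2 * gamma) + eta k * c.
    move=> k.
    have s := step k u Xu.
    have m1 := mF _ _ (Xy k) Xu; rewrite dotvBl in m1.
    have ek := e0 k.
    have nrm : enorm (y k.+1 - u) <= Num.sqrt 2 * Num.sqrt D.
      rewrite -sqrtrM // /enorm ler_sqrt; [exact: dd | lra].
    have hb : enorm (H (y k.+1)) * enorm (y k.+1 - u) <= CH * (Num.sqrt 2 * Num.sqrt D).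
      by apply: ler_pM; [exact: enorm_ge0 | exact: enorm_ge0 | exact: hCH | exact: nrm].
    have cs := CSN (H (y k.+1)) (y k.+1 - u).
    have ce : CH * (Num.sqrt 2 * Num.sqrt D) = c by rewrite /c; ring.
    have hc2 : - (eta k * c) <= eta k * dotv (H (y k.+1)) (y k.+1 - u).
      by rewrite -mulrN; apply: ler_wpM2l; lra.
    have g2 : 0 <= 2 * gamma by lra.
    have t1 : 2 * gamma * dotv (F u) (y k.+1 - u) <= 2 * gamma * dotv (F (y k.+1)) (y k.+1 - u).
      by apply: ler_wpM2l => //; lra.
    have t2 : 2 * gamma * (- (eta k * c)) <= 2 * gamma * (eta k * dotv (H (y k.+1)) (y k.+1 - u)).
      by apply: ler_wpM2l.
    rewrite -(ler_pM2l (_ : 0 < 2 * gamma)); last lra.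
    have -> : 2 * gamma * ((d k - d k.+1) / (2 * gamma) + eta k * c) = (d k - d k.+1) + 2 * gamma * (eta k * c).
      by field; rewrite lt0r_neq0.
    rewrite /d; lra.
  have S1 : \sum_(k < m.+1) dotv (F u) (y k.+1 - u) <= \sum_(k < m.+1) ((d k - d k.+1) / (2 * gamma) + eta k * c).
    by apply: ler_sum => k _; exact: term.
  rewrite big_split /= -!mulr_suml tele in S1.
  have d0 := dd _ _ (Xx 0%N) Xu.
  have dK := dotv_ge0 (x m.+1 - u).
  have S2 : \sum_(k < m.+1) dotv (F u) (y k.+1 - u) <= D / gamma + (\sum_(k < m.+1) eta k) * c.
    have -> : D / gamma = (2 * D) / (2 * gamma) by field; rewrite lt0r_neq0.
    have : (d 0%N - d m.+1) / (2 * gamma) <= (2 * D) / (2 * gamma).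
      by apply: ler_wpM2r; [rewrite invr_ge0; lra | rewrite /d; lra].
    lra.
  apply: le_trans (ler_wpM2l _ S2) _; first by rewrite invr_ge0.
  have -> : (gamma * m.+1%:R)^-1 * D + c * m.+1%:R^-1 * \sum_(k < m.+1) eta k
     = m.+1%:R^-1 * (D / gamma + (\sum_(k < m.+1) eta k) * c).
    by field; rewrite !lt0r_neq0 ?nat_pos.
  by [].
have S0 : SOL X F !=set0 by exists zs; case: zsS.
have SX : forall u, SOL X F u -> X u by move=> u [].
have avgX : forall K, (1 <= K)%N -> X (avg_iter y K).
  by move=> K K1; apply: avg_in.
split; [|split].
- move=> K K1.
  set yb := avg_iter y K.
  set S := SOL X F.
  have gapub : forall s, [set dotv (H v) (yb - v) | v in S] s -> s <= CH0 * (enorm yb + M).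
    move=> s [v Sv <-].
    have := CS (H v) (yb - v).
    have h1 : enorm (yb - v) <= enorm yb + M.
      by have := enormD yb (- v); rewrite enormN; have := hM _ (SX _ Sv); lra.
    have h2 : enorm (H v) * enorm (yb - v) <= CH0 * (enorm yb + M).
      by apply: ler_pM; [exact: enorm_ge0 | exact: enorm_ge0 | apply: hCH0; exact: SX | exact h1].
    lra.
  split.
  + set B := supnorm S H.
    have hB : forall v, S v -> enorm (H v) <= B.
      move=> v Sv; apply: (@my_sup_ge _ _ CH0 _); last by exists v.
      by move=> s [w Sw <-]; apply: hCH0; exact: SX.
    have B0 : 0 <= B by apply: le_trans (enorm_ge0 _) (hB _ zsS.1).
    rewrite /Gap /distv mulNr.
    suff : - (B * inf [set enorm (yb - v) | v in S]) - sup [set dotv (H v) (yb - v) | v in S] <= 0 by lra.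
    apply: le0_eps => e ep0.
    have hinf : has_inf [set enorm (yb - v) | v in S].
      split; first by case: S0 => v Sv; exists (enorm (yb - v)); exists v.
      by exists 0 => s [v _ <-]; exact: enorm_ge0.
    have ep : 0 < e / (B + 1) by apply: divr_gt0 => //; lra.
    have [s [v Sv <-] hs] := inf_adherent ep hinf.
    have g1 : dotv (H v) (yb - v) <= sup [set dotv (H v) (yb - v) | v in S].
      by apply: (@my_sup_ge _ _ _ _ gapub); exists v.
    have c1 := CSN (H v) (yb - v).
    have c2 : enorm (H v) * enorm (yb - v) <= B * (inf [set enorm (yb - v) | v in S] + e / (B + 1)).
      by apply: ler_pM; [exact: enorm_ge0 | exact: enorm_ge0 | exact: hB | exact: ltW].
    have : B * (e / (B + 1)) <= e.
      rewrite mulrA ler_pdivrMr; last lra.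
      nra.
    rewrite mulrDr in c2; lra.
  + rewrite /Gap; apply: my_sup_le; first by case: S0 => v Sv; exists (dotv (H v) (yb - v)); exists v.
    by move=> s [v Sv <-]; exact: pt1.
- move=> K K1; set yb := avg_iter y K.
  have gapub : forall s, [set dotv (F v) (yb - v) | v in X] s -> s <= CF0 * (enorm yb + M).
    move=> s [v Sv <-].
    have := CS (F v) (yb - v).
    have h1 : enorm (yb - v) <= enorm yb + M.
      by have := enormD yb (- v); rewrite enormN; have := hM _ Sv; lra.
    have h2 : enorm (F v) * enorm (yb - v) <= CF0 * (enorm yb + M).
      by apply: ler_pM; [exact: enorm_ge0 | exact: enorm_ge0 | apply: hCF0 | exact h1].
    lra.
  split.
  + rewrite /Gap; apply: (@my_sup_ge _ _ _ _ gapub); exists yb; first exact: avgX.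
    by rewrite subrr dotv0r.
  + rewrite /Gap; apply: my_sup_le; first by case: X0 => v Xv; exists (dotv (F v) (yb - v)); exists v.
    by move=> s [v Xv <-]; exact: pt2.
- move=> hy1 hy2 z cz.
  have zX : X z.
    have hX : (avg_iter y @ \oo) X by exists 1%N => // K /= K1; exact: avgX.
    move: cz; rewrite clusterE => /(_ X hX).
    by have := Xcl; rewrite closure_id => <-.
  have hF : forall u, X u -> dotv (F u) (z - u) <= 0.
    move=> u Xu.
    apply: (@cluster_dot _ _ _ z (F u) u (fun K => (gamma * K%:R)^-1 * D + c * K%:R^-1 * \sum_(k < K) eta k) cz); last first.
      by move=> K K1; exact: pt2.
    move=> e ep0.
    have ee : 0 < e / 2 / (c + 1) by apply: divr_gt0; lra.
    move/cvgrPdist_lt: hy2 => /(_ _ ee) [N1 _ h1].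
    have [N2 _ h2] := nbhs_infty_ger (2 * D / (gamma * e) + 1).
    exists (maxn N1 N2) => // K /= hK.
    have := h1 K (leq_trans (leq_maxl _ _) hK); rewrite /= sub0r normrN => hf.
    have := h2 K (leq_trans (leq_maxr _ _) hK); rewrite /= => hK2.
    set t := K%:R in hf hK2 *.
    set f := t^-1 * \sum_(k < K) eta k in hf *.
    have ff : f <= e / 2 / (c + 1) by apply: le_trans (ler_norm _) (ltW hf).
    have ge0 : 0 < gamma * e by apply: mulr_gt0.
    have hr : gamma * e * (2 * D / (gamma * e)) = 2 * D by field; rewrite (lt0r_neq0 g0) (lt0r_neq0 ep0).
    have rr : 0 <= 2 * D / (gamma * e) by apply: divr_ge0; lra.
    have tp : 0 < t by lra.
    have T1 : (gamma * t)^-1 * D <= e / 2.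
      rewrite mulrC ler_pdivrMr; last by apply: mulr_gt0.
      have := ler_wpM2l (ltW ge0) hK2; nra.
    have T2 : c * f <= e / 2.
      have : c * f <= c * (e / 2 / (c + 1)) by apply: ler_wpM2l.
      have : c * (e / 2 / (c + 1)) <= e / 2.
        rewrite mulrA ler_pdivrMr; last lra.
        nra.
      lra.
    rewrite -mulrA -/f; lra.
  have zS : SOL X F z by apply: (@minty _ _ X F LF z cX lF LF0 zX hF).
  have hH : forall u, SOL X F u -> dotv (H u) (z - u) <= 0.
    move=> u Su.
    apply: (@cluster_dot _ _ _ z (H u) u (fun K => (gamma * eta K.-1 * K%:R)^-1 * D) cz); last first.
      by move=> K K1; exact: pt1.
    move=> e ep0.
    have ge0 : 0 < gamma * e by apply: mulr_gt0.
    have rr : 0 <= D / (gamma * e) by apply: divr_ge0; lra.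
    move/cvgryPger: hy1 => /(_ (D / (gamma * e) + 1)) [].
      by rewrite realE; apply/orP; left; lra.
    move=> N1 _ h1.
    exists (maxn N1 1) => // K /= hK.
    have := h1 K (leq_trans (leq_maxl _ _) hK); rewrite /= => hK2.
    have hr : gamma * e * (D / (gamma * e)) = D by field; rewrite (lt0r_neq0 g0) (lt0r_neq0 ep0).
    have etap := e0 K.-1.
    have tp : 0 < K%:R * eta K.-1 by lra.
    rewrite mulrC (_ : gamma * eta K.-1 * K%:R = gamma * (K%:R * eta K.-1)); last by ring.
    rewrite ler_pdivrMr; last by apply: mulr_gt0.
    have := ler_wpM2l (ltW ge0) hK2; nra.
  have lHS : vi_lipschitz_on (SOL X F) H LH by move=> a b Sa Sb; apply: lH; apply: SX.
  exact: (@minty _ _ (SOL X F) H LH z (@SOL_convex _ _ X F LF cX lF LF0 mF) lHS LH0 zS hH).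
Qed.
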